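(* Let $k\ge1$, $\lambda>0$, $\beta\in[0,\infty]$ and $\mathcal{D}\in\{\mathcal{E},\mathcal{O}\}^k$. For any $\mathcal{D}$-polymer $\gamma=(A_1,\dots,A_k)$, \[ \omega(\gamma) \le \lambda^{\|\gamma\|} \tilde\alpha_k^{\|N(\gamma)\|}, \] where $\|\gamma\|:=\sum_i|A_i|$, $\|N(\gamma)\|:=\sum_i|N(A_i)|$, $\tilde\alpha_k:=\alpha_k^{1/k}$ and $\alpha_k := \frac{1 + ((1+\lambda)^k-1)e^{-\beta}}{(1+\lambda)^k}$.
   Context: $Q_d$ is the hypercube on $\{0,1\}^d$, $\mathcal{E},\mathcal{O}$ its even and odd vertices; $N(U)$ the neighborhood, $[U]:=\{v:N(v)\subset N(U)\}$ the closure; $E(A,B)$ the edges between $A$ and $B$. A polymer is a tuple $\gamma=(A_1,\dots,A_k)$ with each $A_i$ contained in $\mathcal{E}$ or in $\mathcal{O}$, $|[A_i]|\le\frac34 2^{d-1}$, and $H_\gamma$ connected (hence nonempty), where $H_\gamma$ has vertices $(i,u)$, $u\in A_i$, with $(i,u)\sim(j,v)$ iff ($i=j$ and $\mathrm{dist}(u,v)=2$) or ($i\ne j$ and $\mathrm{dist}(u,v)\in\{0,1\}$). A $\mathcal{D}$-polymer additionally has $A_i\subset\mathcal{D}_i$ for all $i$. Its weight is \[ \omega(\gamma):= \sum_{B_i \subset N(A_i)\,\forall i} \frac{\lambda^{\sum_i(|A_i|+|B_i|)}}{(1+\lambda)^{\sum_i|N(A_i)|}} e^{-\beta|E(A_1,B_1)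 \cup \cdots \cup E(A_k,B_k)|}. \] *)

(* Defs.v *)
From HB Require Import structures.
From mathcomp Require Import all_boot all_order all_algebra.
From mathcomp Require Import all_classical all_reals all_analysis.
Set Implicit Arguments. Unset Strict Implicit. Unset Printing Implicit Defensive.
Import Order.TTheory GRing.Theory Num.Theory.
Local Open Scope ring_scope.

Definition vtx (d : nat) := {ffun 'I_d -> bool}.

(* Hamming distance = graph distance in Q_d. *)
Definition hdist d (u v : vtx d) : nat := #|[set i | u i != v i]|.
Definition hadj d (u v : vtx d) : bool := hdist u v == 1%N.

(* Even vertices E (true) and odd vertices O (false). *)
Definition is_even d (u : vtx d) : bool := ~~ odd #|[set i | u i]|.
Definition parity_class d (b : bool) : {set vtx d} := [set u | is_even u == b].
Definition Even d : {set vtx d} := parity_class d true.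
Definition Odd d : {set vtx d} := parity_class d false.

Definition nbh d (U : {set vtx d}) : {set vtx d} :=
  [set v | [exists u in U, hadj u v]].
Definition closure_set d (U : {set vtx d}) : {set vtx d} :=
  [set v | nbh [set v] \subset nbh U].

Definition Hvert d k (A : 'I_k -> {set vtx d}) : {set ('I_k * vtx d)} :=
  [set p | p.2 \in A p.1].
Definition Hadj d k (A : 'I_k -> {set vtx d}) : rel ('I_k * vtx d) :=
  fun p q =>
    [&& p \in Hvert A, q \in Hvert A &
        if p.1 == q.1 then hdist p.2 q.2 == 2%N
        else (hdist p.2 q.2 <= 1)%N].
Definition H_connected d k (A : 'I_k -> {set vtx d}) : Prop :=
  Hvert A != finset.set0 /\
  forall p q, p \in Hvert A -> q \in Hvert A -> connect (Hadj A) p q.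

(* Polymers: |[A_i]| <= (3/4) 2^(d-1), written as 8 |[A_i]| <= 3 2^d. *)
Definition polymer d k (A : 'I_k -> {set vtx d}) : Prop :=
  (forall i, A i \subset Even d \/ A i \subset Odd d) /\
  (forall i, 8 * #|closure_set (A i)| <= 3 * 2 ^ d)%N /\
  H_connected A.
Definition D_polymer d k (D : 'I_k -> bool) (A : 'I_k -> {set vtx d}) : Prop :=
  polymer A /\ forall i, A i \subset parity_class d (D i).

(* E(A,B): edges of Q_d (as 2-element vertex sets) between A and B. *)
Definition edges_between d (A B : {set vtx d}) : {set {set vtx d}} :=
  [set [set u; v] | u in A, v in B & hadj u v].

(* e^{-beta * n} for beta in [0, +oo], with e^{-oo * 0} = 1 and
   e^{-oo * n} = 0 for n > 0. *)
Definition exp_neg {R : realType} (beta : \bar R) (n : nat) : R :=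
  match beta with
  | EFin b => expR (- (b * n%:R))
  | _ => if n == 0%N then 1 else 0
  end.

Definition exp_neg1 {R : realType} (beta : \bar R) : R := exp_neg beta 1.

Definition weight {R : realType} (lambda : R) (beta : \bar R) d k
    (A : 'I_k -> {set vtx d}) : R :=
  \sum_(B : {ffun 'I_k -> {set vtx d}} | [forall i, B i \subset nbh (A i)])
    lambda ^+ (\sum_i (#|A i| + #|B i|))%N
    / (1 + lambda) ^+ (\sum_i #|nbh (A i)|)%N
    * exp_neg beta #|\bigcup_i edges_between (A i) (B i)|.

Definition alpha_k {R : realType} (lambda : R) (beta : \bar R) (k : nat) : R :=
  (1 + ((1 + lambda) ^+ k - 1) * exp_neg1 beta) / (1 + lambda) ^+ k.

Definition alpha_tilde {R : realType} (lambda : R) (beta : \bar R) (k : nat) : R :=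
  powR (alpha_k lambda beta k) (k%:R^-1).

Definition poly_size d k (A : 'I_k -> {set vtx d}) : nat := (\sum_i #|A i|)%N.
Definition poly_nbh_size d k (A : 'I_k -> {set vtx d}) : nat :=
  (\sum_i #|nbh (A i)|)%N.

(* Main.v *)
Require Import Defs.
From HB Require Import structures.
From mathcomp Require Import all_boot all_order all_algebra.
From mathcomp Require Import all_classical all_reals all_analysis.
Import Order.TTheory GRing.Theory Num.Theory.
Local Open Scope ring_scope.

Lemma young01 (R : realType) (z t : R) : 0 <= z -> 0 <= t <= 1 ->
  powR z t <= t * z + (1 - t).
Proof.
move=> z0 /andP[t0 t1].
have [->|tn0] := eqVneq t 0; first by rewrite powRr0 mul0r add0r subr0.
have [->|tn1] := eqVneq t 1; first by rewrite powRr1 // mul1r subrr addr0.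
have tp : 0 < t by rewrite lt_neqAle eq_sym tn0 t0.
have tl : t < 1 by rewrite lt_neqAle tn1 t1.
have t1p : 0 < 1 - t by rewrite subr_gt0.
have := @conjugate_powR R (powR z t) 1 t^-1 (1 - t)^-1 (powR_ge0 _ _) ler01.
rewrite !invr_gt0 tp t1p => /(_ isT isT).
have e1 : t^-1^-1 + (1 - t)^-1^-1 = 1 by rewrite !invrK addrC subrK.
move=> /(_ e1).
rewrite mulr1 -powRrM mulfV ?gt_eqF // powRr1 // powR1.
move=> h; apply: (le_trans h).
have e2 : z / t^-1 + 1 / (1 - t)^-1 = t * z + (1 - t) by rewrite !invrK mul1r mulrC.
by rewrite e2.
Qed.

From mathcomp Require Import ring lra.

Lemma Gineq (R : realType) (q x : R) (m k : nat) : 1 <= q -> 0 <= x <= 1 ->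
  (0 < k)%N -> (m <= k)%N ->
  1 + (q ^+ m - 1) * x <= (powR (1 + (q ^+ k - 1) * x) k%:R^-1) ^+ m.
Proof.
move=> q1 /andP[x0 x1] k0 mk.
have q0 : 0 <= q by apply: le_trans q1.
have Q1 : 1 <= q ^+ k by rewrite exprn_ege1.
set Q := q ^+ k.
set Y := 1 + (Q - 1) * x.
have Y1 : 1 <= Y by rewrite lerDl mulr_ge0 // subr_ge0.
have Y0 : 0 < Y by apply: lt_le_trans Y1.
have kR0 : (k%:R : R) != 0 by rewrite pnatr_eq0 -lt0n.
set t : R := m%:R / k%:R.
have t01 : 0 <= t <= 1.
  apply/andP; split; first by rewrite divr_ge0.
  by rewrite ler_pdivrMr ?ltr0n // mul1r ler_nat.
rewrite -[X in _ <= X]powR_mulrn ?powR_ge0 // -powRrM (mulrC _ m%:R) -/t.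
have Qt : powR Q t = q ^+ m.
  by rewrite /Q -powR_mulrn // -powRrM mulrCA mulfV // mulr1 powR_mulrn.
have Yi0 : 0 <= Y^-1 by rewrite invr_ge0 ltW.
have Q0 : 0 <= Q by apply: le_trans Q1.
have H1 := young01 _ _ _ Yi0 t01.
have H2 := young01 _ _ _ (mulr_ge0 Q0 Yi0) t01.
rewrite powRM ?invr_ge0 ?(le_trans ler01 Q1) ?(ltW Y0) // Qt in H2.
have Yinv : powR Y^-1 t = (powR Y t)^-1.
  by rewrite -powR_inv1 ?(ltW Y0) // -powRrM mulN1r powRN.
rewrite Yinv in H1 H2.
have a0 : 0 < powR Y t by apply: powR_gt0.
set a := powR Y t in H1 H2 a0 *.
have key : (1 + (q ^+ m - 1) * x) / a <= 1.
  have -> : (1 + (q ^+ m - 1) * x) / a = (1 - x) * a^-1 + x * (q ^+ m * a^-1) by ring.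
  apply: le_trans (lerD (ler_wpM2l _ H1) (ler_wpM2l x0 H2)) _; first by rewrite subr_ge0.
  have -> : (1 - x) * (t * Y^-1 + (1 - t)) + x * (t * (Q * Y^-1) + (1 - t))
     = t * ((1 + (Q - 1) * x) / Y) + (1 - t) by ring.
  by rewrite -/Y mulfV ?gt_eqF // mulr1 addrC subrK.
by rewrite ler_pdivrMr // mul1r in key.
Qed.

Lemma exp_negE (R : realType) (beta : \bar R) n : (0 <= beta)%E ->
  exp_neg beta n = exp_neg1 beta ^+ n.
Proof.
case: beta => [b| |] //= _.
  by rewrite mulr1 -mulNr expRM_natr.
by rewrite expr0n; case: n.
Qed.

Lemma exp_neg1_01 (R : realType) (beta : \bar R) : (0 <= beta)%E ->
  0 <= exp_neg1 beta <= 1.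
Proof.
case: beta => [b| |] //= b0; last by rewrite lexx ler01.
by rewrite expR_ge0 expR_le1 mulr1 oppr_le0 -lee_fin.
Qed.

Lemma alpha_tildeE (R : realType) (lambda : R) (beta : \bar R) k :
  (0 < k)%N -> 0 < lambda -> (0 <= beta)%E ->
  alpha_tilde lambda beta k =
  powR (1 + ((1 + lambda) ^+ k - 1) * exp_neg1 beta) k%:R^-1 / (1 + lambda).
Proof.
move=> k0 l0 b0.
have /andP[x0 _] := exp_neg1_01 _ _ b0.
have q1 : 1 <= 1 + lambda by rewrite lerDl ltW.
have q0 : 0 < 1 + lambda by rewrite addr_gt0.
have Q0 : 0 < (1 + lambda) ^+ k by rewrite exprn_gt0.
rewrite /alpha_tilde /alpha_k powRM; last 2 first.
- by rewrite addr_ge0 // mulr_ge0 // subr_ge0 exprn_ege1.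
- by rewrite invr_ge0 ltW.
congr (_ * _).
rewrite -powR_inv1 ?(ltW Q0) // -powRrM mulN1r powRN.
rewrite -powR_mulrn ?(ltW q0) // -powRrM mulfV ?pnatr_eq0 -?lt0n //.
by rewrite powRr1 // ltW.
Qed.
Set Implicit Arguments. Unset Strict Implicit. Unset Printing Implicit Defensive.

Lemma hadj_parity d (u v : vtx d) : hadj u v -> is_even u != is_even v.
Proof.
rewrite /hadj /hdist => /cards1P [j hj].
have ne : u j != v j by have := set11 j; rewrite -hj inE.
have same : [set i | u i] :\ j = [set i | v i] :\ j.
  apply/setP => i; rewrite !inE; have [->|ij] //= := eqVneq i j.
  have : i \notin [set j] by rewrite inE ij.
  by rewrite -hj inE negbK => /eqP ->.
rewrite /is_even (cardsD1 j [set i | u i]) (cardsD1 j [set i | v i]) same !inE.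
by move: ne; case: (u j); case: (v j) => //= _; case: (odd _).
Qed.

Lemma parity_noadj d b (u v : vtx d) :
  u \in parity_class d b -> v \in parity_class d b -> ~~ hadj u v.
Proof.
rewrite !inE => /eqP hu /eqP hv; apply/negP => /hadj_parity.
by rewrite hu hv eqxx.
Qed.

Definition rep d (U : {set vtx d}) (v : vtx d) : vtx d :=
  odflt v [pick u in U | hadj u v].

Lemma repP d (U : {set vtx d}) v : v \in nbh U -> (rep U v \in U) && hadj (rep U v) v.
Proof.
rewrite inE => /existsP[u /andP[uU huv]]; rewrite /rep.
case: pickP => [w /andP[-> ->] //|/(_ u)].
by rewrite uU huv.
Qed.

Definition edg d (U : {set vtx d}) (v : vtx d) : {set vtx d} := [set rep U v; v].

Lemma edg_inj d (U : {set vtx d}) b :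
  U \subset parity_class d b -> {in nbh U &, injective (edg U)}.
Proof.
move=> sU v w hv hw e.
have [//|nvw] := eqVneq v w; exfalso.
have /andP[rv hrv] := repP hv.
have /andP[rw hrw] := repP hw.
have : v \in edg U w by rewrite -e /edg !inE eqxx orbT.
rewrite /edg !inE => /orP[/eqP vrw|/eqP vw]; last by rewrite vw eqxx in nvw.
have : w \in edg U v by rewrite e /edg !inE eqxx orbT.
rewrite /edg !inE => /orP[/eqP wrv|/eqP wv]; last by rewrite wv eqxx in nvw.
have wU : w \in U by rewrite wrv.
have vU : v \in U by rewrite vrw.
move: hrv; rewrite -wrv => hwv.
by move: (parity_noadj (fintype.subsetP sU _ wU) (fintype.subsetP sU _ vU)); rewrite hwv.
Qed.

Lemma card_sumE (T : finType) (S : {set T}) : #|S| = (\sum_t (t \in S : nat))%N.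
Proof.
by rewrite -sum1_card big_mkcond /=; apply: eq_bigr => t _; case: (t \in S).
Qed.

Lemma sum_le_subset (T : finType) (R : numDomainType) (A B : {pred T}) (f : T -> R) :
  {subset A <= B} -> (forall t, 0 <= f t) ->
  \sum_(t in A) f t <= \sum_(t in B) f t.
Proof.
move=> sAB f0; rewrite [X in _ <= X](bigID (fun t => t \in A)) /=.
rewrite -[X in X <= _]addr0; apply: lerD; last by apply: sumr_ge0.
rewrite le_eqVlt; apply/orP; left; apply/eqP; apply: eq_bigl => t.
by rewrite andb_idl // => /sAB.
Qed.

Lemma sum_subsets_pow (R : comRingType) (T : finType) (K : {set T}) (lam : R) :
  \sum_(Z : {set T} | Z \subset K) lam ^+ #|Z| = (1 + lam) ^+ #|K|.
Proof.
rewrite (partition_big (fun Z : {set T} => inord #|Z| : 'I_(#|K|.+1)) xpredT) //=.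
rewrite exprDn; apply: eq_bigr => j _.
rewrite expr1n mul1r.
rewrite (eq_bigr (fun _ => lam ^+ j)); last first.
  move=> Z /andP[sZ /eqP <-]; rewrite inordK // ltnS; exact: subset_leq_card.
rewrite sumr_const -cards_draws; congr (_ *+ _).
apply: eq_card => Z; rewrite unfold_in !inE /=.
case sZ: (Z \subset K) => //=.
by rewrite -val_eqE /= inordK // ltnS subset_leq_card.
Qed.

Lemma sum_subsets (R : comRingType) (T : finType) (K : {set T}) (lam x : R) :
  \sum_(Z : {set T} | Z \subset K) lam ^+ #|Z| * x ^+ (Z != finset.set0) =
  1 + ((1 + lam) ^+ #|K| - 1) * x.
Proof.
rewrite (bigD1 finset.set0) /=; last exact: finset.sub0set.
rewrite (_ : #|_| = 0%N); last exact: cards0.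
rewrite eqxx expr0 mul1r; congr (_ + _).
have -> : (1 + lam) ^+ #|K| - 1 =
    \sum_(Z : {set T} | (Z \subset K) && (Z != finset.set0)) lam ^+ #|Z|.
  rewrite -sum_subsets_pow (bigD1 finset.set0) /=; last exact: finset.sub0set.
  rewrite (_ : #|_| = 0%N); last exact: cards0.
  by rewrite expr0 addrC addrK.
rewrite mulr_suml; apply: eq_bigr => Z /andP[_ ->]; by rewrite expr1.
Qed.

Definition Phi d k (A : 'I_k -> {set vtx d}) (B : {ffun 'I_k -> {set vtx d}}) :
  {ffun {set vtx d} -> {set 'I_k}} :=
  [ffun y => [set i | [exists v in B i, edg (A i) v == y]]].

Definition Kset d k (A : 'I_k -> {set vtx d}) (y : {set vtx d}) : {set 'I_k} :=
  [set i | [exists v in nbh (A i), edg (A i) v == y]].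

Lemma fiber_Phi d k (A : 'I_k -> {set vtx d}) (B : {ffun 'I_k -> {set vtx d}}) i :
  [set y | i \in Phi A B y] = edg (A i) @: B i.
Proof.
apply/setP => y; rewrite !inE ffunE inE.
apply/existsP/imsetP => [[v /andP[vB /eqP <-]]|[v vB ->]]; first by exists v.
by exists v; rewrite vB eqxx.
Qed.

Lemma fiber_K d k (A : 'I_k -> {set vtx d}) i :
  [set y | i \in Kset A y] = edg (A i) @: nbh (A i).
Proof.
apply/setP => y; rewrite !inE.
apply/existsP/imsetP => [[v /andP[vB /eqP <-]]|[v vB ->]]; first by exists v.
by exists v; rewrite vB eqxx.
Qed.

Lemma sum_card_Phi d k (D : 'I_k -> bool) (A : 'I_k -> {set vtx d}) (B : {ffun 'I_k -> {set vtx d}}) :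
  (forall i, A i \subset parity_class d (D i)) ->
  (forall i, B i \subset nbh (A i)) ->
  (\sum_y #|Phi A B y| = \sum_i #|B i|)%N.
Proof.
move=> hD hB.
rewrite (eq_bigr (fun y => \sum_i (i \in Phi A B y : nat))%N); last first.
  by move=> y _; rewrite card_sumE.
rewrite exchange_big; apply: eq_bigr => i _.
rewrite (_ : (\sum_y _)%N = #|[set y | i \in Phi A B y]|); last first.
  by rewrite card_sumE; apply: eq_bigr => y _; rewrite inE.
rewrite fiber_Phi card_in_imset //.
move=> u v hu hv; apply: (edg_inj (hD i)); exact: (fintype.subsetP (hB i)).
Qed.

Lemma sum_card_K d k (A : 'I_k -> {set vtx d}) :
  (\sum_y #|Kset A y| <= \sum_i #|nbh (A i)|)%N.
Proof.
rewrite (eq_bigr (fun y => \sum_i (i \in Kset A y : nat))%N); last first.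
  by move=> y _; rewrite card_sumE.
rewrite exchange_big; apply: leq_sum => i _.
rewrite (_ : (\sum_y _)%N = #|[set y | i \in Kset A y]|); last first.
  by rewrite card_sumE; apply: eq_bigr => y _; rewrite inE.
by rewrite fiber_K leq_imset_card.
Qed.


Lemma term_bound (R : realType) d k (lambda : R) (beta : \bar R) (D : 'I_k -> bool)
  (A : 'I_k -> {set vtx d}) (B : {ffun 'I_k -> {set vtx d}}) :
  0 < lambda -> (0 <= beta)%E ->
  (forall i, A i \subset parity_class d (D i)) ->
  (forall i, B i \subset nbh (A i)) ->
  lambda ^+ (\sum_i (#|A i| + #|B i|)) / (1 + lambda) ^+ (\sum_i #|nbh (A i)|) *
    exp_neg beta #|\bigcup_i edges_between (A i) (B i)|
  <= lambda ^+ poly_size A / (1 + lambda) ^+ poly_nbh_size A *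
     \prod_y (lambda ^+ #|Phi A B y| * exp_neg1 beta ^+ (Phi A B y != finset.set0)).
Proof.
move=> l0 b0 hD hB.
have /andP[x0 x1] := exp_neg1_01 _ _ b0.
set x := exp_neg1 beta.
have q0 : 0 < 1 + lambda by rewrite addr_gt0.
rewrite big_split /= exprD big_split /= !prodrXr (sum_card_Phi hD hB).
rewrite exp_negE // -/x.
have hE : x ^+ #|\bigcup_(i < k) edges_between (A i) (B i)| <=
    x ^+ (\sum_y (Phi A B y != finset.set0)).
  apply: ler_wiXn2l => //.
  rewrite (_ : (\sum_y _)%N = #|[set y | Phi A B y != finset.set0]|); last first.
    by rewrite card_sumE; apply: eq_bigr => y _; rewrite inE.
  apply: subset_leq_card; apply/fintype.subsetP => y; rewrite inE.
  case/set0Pn => i; rewrite ffunE inE => /existsP [v /andP[vB /eqP <-]].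
  apply/bigcupP; exists i => //.
  have /andP[rA hr] := repP (fintype.subsetP (hB i) v vB).
  by apply/imset2P; exists (rep (A i) v) v => //; rewrite inE vB hr.
apply: (le_trans (ler_wpM2l _ hE)).
  by apply: divr_ge0; [apply: mulr_ge0|]; apply: exprn_ge0 => //; exact: ltW.
rewrite /poly_size /poly_nbh_size.
set a := lambda ^+ _; set b := lambda ^+ _; set e := (1 + lambda) ^+ _; set f := x ^+ _.
by rewrite le_eqVlt; apply/orP; left; apply/eqP; ring.
Qed.

Lemma family_bound (R : realType) d k (lambda x : R) (D : 'I_k -> bool)
  (A : 'I_k -> {set vtx d}) :
  (0 < k)%N -> 0 < lambda -> 0 <= x <= 1 ->
  (forall i, A i \subset parity_class d (D i)) ->
  \sum_(B in [set B : {ffun 'I_k -> {set vtx d}} | [forall i, B i \subset nbh (A i)]])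
     \prod_y (lambda ^+ #|Phi A B y| * x ^+ (Phi A B y != finset.set0))
  <= (powR (1 + ((1 + lambda) ^+ k - 1) * x) k%:R^-1) ^+ poly_nbh_size A.
Proof.
move=> k1 l0 /andP[x0 x1] hD.
set dom := [set B : {ffun 'I_k -> {set vtx d}} | _].
set q := 1 + lambda.
have q1 : 1 <= q by rewrite lerDl ltW.
set Y := 1 + (q ^+ k - 1) * x.
have Y1 : 1 <= Y by rewrite lerDl mulr_ge0 // subr_ge0 exprn_ege1.
set c := powR Y k%:R^-1.
have c1 : 1 <= c.
  have kp : 0 <= k%:R^-1 :> R by rewrite invr_ge0 ler0n.
  have := ge0_ler_powR kp; rewrite /c => /(_ 1 Y).
  by rewrite !nnegrE ler01 (le_trans ler01 Y1) powR1 => /(_ isT isT Y1).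
pose h := fun Z : {set 'I_k} => lambda ^+ #|Z| * x ^+ (Z != finset.set0).
pose g := fun F : {ffun {set vtx d} -> {set 'I_k}} => \prod_y h (F y).
have -> : \sum_(B in dom) \prod_y (lambda ^+ #|Phi A B y| * x ^+ (Phi A B y != finset.set0))
    = \sum_(F in Phi A @: dom) g F.
  rewrite big_imset //.
  move=> B1 B2; rewrite !inE => /forallP h1 /forallP h2 e.
  have sub : forall (B B' : {ffun 'I_k -> {set vtx d}}) i v,
      (forall i, B i \subset nbh (A i)) -> (forall i, B' i \subset nbh (A i)) ->
      Phi A B = Phi A B' -> v \in B i -> v \in B' i.
    move=> B B' i v hB hB' eB vB.
    have : i \in Phi A B (edg (A i) v).
      by rewrite ffunE inE; apply/existsP; exists v; rewrite vB eqxx.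
    rewrite eB ffunE inE => /existsP[w /andP[wB /eqP ew]].
    have := edg_inj (hD i) (fintype.subsetP (hB' i) _ wB) (fintype.subsetP (hB i) _ vB) ew.
    by move=> <-.
  apply/ffunP => i; apply/setP => v; apply/idP/idP; first exact: sub.
  by apply: sub => //; rewrite e.
have g0 : forall F, 0 <= g F.
  by move=> F; apply: prodr_ge0 => y _; rewrite mulr_ge0 ?exprn_ge0 // ltW.
pose Q := fun (y : {set vtx d}) (Z : {set 'I_k}) => Z \subset Kset A y.
apply: (le_trans (sum_le_subset (B := family Q) _ g0)).
  move=> F /imsetP[B]; rewrite inE => /forallP hB ->.
  apply/familyP => y; rewrite ffunE unfold_in /Q /=.
  apply/fintype.subsetP => i; rewrite !inE => /existsP[v /andP[vB e]].
  by apply/existsP; exists v; rewrite e andbT (fintype.subsetP (hB i)).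
have -> : \sum_(F in family Q) g F =
    \prod_(y : {set vtx d}) \sum_(Z : {set 'I_k} | Z \subset Kset A y) h Z.
  by rewrite bigA_distr_big_dep.
apply: (@le_trans _ _ (\prod_y c ^+ #|Kset A y|)).
  apply: ler_prod => y _; apply/andP; split.
    by apply: sumr_ge0 => Z _; rewrite mulr_ge0 ?exprn_ge0 // ltW.
  rewrite /h sum_subsets; apply: Gineq => //; first by rewrite x0 x1.
  by apply: leq_trans (max_card _) _; rewrite card_ord.
by rewrite prodrXr; apply: ler_weXn2l => //; apply: sum_card_K.
Qed.

Unset Implicit Arguments.

Theorem lemma4p5 (R : realType) (d k : nat) (lambda : R) (beta : \bar R)
    (D : 'I_k -> bool) (A : 'I_k -> {set vtx d}) :
  (1 <= k)%N -> 0 < lambda -> (0 <= beta)%E ->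
  D_polymer D A ->
  weight lambda beta A <=
    lambda ^+ poly_size A * alpha_tilde lambda beta k ^+ poly_nbh_size A.
Proof.
move=> k1 l0 b0 [_ hD].
have x01 := exp_neg1_01 _ _ b0.
rewrite alpha_tildeE //.
set c := powR _ _.
have q0 : 0 < 1 + lambda by rewrite addr_gt0.
apply: (@le_trans _ _ (lambda ^+ poly_size A / (1 + lambda) ^+ poly_nbh_size A
    * c ^+ poly_nbh_size A)).
  rewrite /weight (eq_bigl (fun B => B \in
     [set B : {ffun 'I_k -> {set vtx d}} | [forall i, B i \subset nbh (A i)]])); last first.
    by move=> B; rewrite inE.
  apply: (@le_trans _ _ (\sum_(B in [set B : {ffun 'I_k -> {set vtx d}} |
       [forall i, B i \subset nbh (A i)]])
     lambda ^+ poly_size A / (1 + lambda) ^+ poly_nbh_size A *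
     \prod_y (lambda ^+ #|Phi A B y| * exp_neg1 beta ^+ (Phi A B y != finset.set0)))).
    apply: ler_sum => B; rewrite inE => /forallP hB; exact: term_bound.
  rewrite -mulr_sumr; apply: ler_wpM2l; last exact: family_bound.
  by rewrite divr_ge0 // exprn_ge0 // ltW.
rewrite le_eqVlt; apply/orP; left; apply/eqP.
by rewrite expr_div_n mulrAC -mulrA.
Qed.
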